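(* If $(X,x_0)$ is a pointed epitopological space then $\Omega^{\mathrm{ps}}(X,x_0)=\Omega^{\mathrm{epi}}(X,x_0)$ (same set and same pseudotopological structure). If $(X',x_0')$ is a pointed topological space then $\Omega^{\mathrm{epi}}(X',x_0')=\Omega^{\mathrm{top}}(X',x_0')$.
   Context: For a set $X$, $U(X)$ is the set of ultrafilters on $X$, $\dot x$ the principal ultrafilter at $x$; $f_*\mathscr F=\{S:f^{-1}(S)\in\mathscr F\}$. A pseudotopological space is a set $X$ with $u\subset U(X)\times X$ containing all $(\dot x,x)$; write $\mathscr U\to x$; for a filter, $\mathscr F\to x$ means every finer ultrafilter converges to $x$. Continuous maps: $\mathscr U\to x\Rightarrow f_*\mathscr U\to f(x)$. Subspaces carry the initial structure w.r.t. the inclusion. Topological spaces are regarded as pseudotopological via ultrafilter convergence. For pseudotopological $X,Y$, $Y^X$ denotes the set of continuous maps $X\to Y$ with the pseudotopology: a filter $\mathscr F\to f$ iff for every filter $\mathscr G\to x$ in $X$, $\mathrm{ev}_*(\mathscr F\times\mathscr G)\to f(x)$. A pseudotopological space is epitopological if its structure is initial w.r.t. some family of maps $X\to Z_j^{Y_j}$, $Y_j,Z_j$ topological; the full subcategory $\mathsf{EpiTop}$ of such spaces is cartesian closed. $\Omega^{\mathrm{ps}}(X,x_0)$ is the set of loops $l\colon[0,1]\to X$ with $l(0)=l(1)=x_0$ with the subspace pseudotopology of $X^{[0,1]}$. For an epitopological space, $\Omega^{\mathrm{epi}}(X,x_0)$ is the same set with the subspace structure (initial structure in $\mathsf{EpiTop}$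 w.r.t. the inclusion) of the exponential object $X^{[0,1]}$ of the cartesian closed category $\mathsf{EpiTop}$. For a topological space, $\Omega^{\mathrm{top}}(X,x_0)$ is the set of based loops with the subspace topology of the compact-open topology, regarded as a pseudotopological space. *)

(* Defs.v *)
From HB Require Import structures.
From mathcomp Require Import all_boot all_order all_algebra.
From mathcomp Require Import all_classical all_reals all_analysis.
From mathcomp Require Import Rstruct Rstruct_topology.

Unset Printing Implicit Defensive.
Import Order.TTheory GRing.Theory Num.Theory.
Local Open Scope classical_set_scope.
Local Open Scope ring_scope.

(** A space is a carrier set [car] inside an ambient type [pt], together with a
    relation [cv U x] ("U --> x") between ultrafilters U on the carrier and
    points x of the carrier.  An ultrafilter on the carrier [car] is encoded,
    as usual, as an ultrafilter on [pt] containing [car]; the values of [cv]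
    outside (ultrafilters on car) x car are irrelevant. *)
Record pspace := PSpace {
  pt : Type;
  car : set pt;
  cv : set_system pt -> pt -> Prop }.

Definition ultra_on (X : pspace) (U : set_system (pt X)) : Prop :=
  UltraFilter U /\ U (car X).

Definition is_pseudotop (X : pspace) : Prop :=
  forall x, car X x -> cv X (principal_filter x) x.

Definition fcv (X : pspace) (F : set_system (pt X)) (x : pt X) : Prop :=
  forall U, ultra_on X U -> F `<=` U -> cv X U x.

Definition ps_cont (X Y : pspace) (f : pt X -> pt Y) : Prop :=
  (forall x, car X x -> car Y (f x)) /\
  (forall U x, ultra_on X U -> car X x -> cv X U x -> cv Y (f @ U) (f x)).

Definition same_cv (T : Type) (S : set T) (c1 c2 : set_system T -> T -> Prop)
    : Prop :=
  forall U x, UltraFilter U -> U S -> S x -> (c1 U x <-> c2 U x).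

Definition top_ps (T : topologicalType) : pspace :=
  @PSpace T setT (fun U x => U --> x).

Definition ev (A B : Type) (p : (A -> B) * A) : B := p.1 p.2.

Definition ps_exp (X Y : pspace) : pspace :=
  @PSpace (pt X -> pt Y) (ps_cont X Y)
    (fun F f => forall (G : set_system (pt X)) (x : pt X),
       ProperFilter G -> G (car X) -> car X x -> fcv X G x ->
       fcv Y (@ev (pt X) (pt Y) @ filter_prod F G) (f x)).

Definition is_initial (X : pspace) (J : Type) (Z : J -> pspace)
    (f : forall j, pt X -> pt (Z j)) : Prop :=
  (forall j x, car X x -> car (Z j) (f j x)) /\
  forall U x, ultra_on X U -> car X x ->
    (cv X U x <-> forall j, cv (Z j) (f j @ U) (f j x)).

Definition epitop (X : pspace) : Prop :=
  exists (J : Type) (Y Z : J -> topologicalType)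
         (f : forall j, pt X -> (Y j -> Z j)),
    @is_initial X J (fun j => ps_exp (top_ps (Y j)) (top_ps (Z j))) f.

Definition ps_prod (X Y : pspace) : pspace :=
  @PSpace (pt X * pt Y) (car X `*` car Y)
    (fun U p => cv X (fst @ U) p.1 /\ cv Y (snd @ U) p.2).

(** The exponential object Y^X of the cartesian closed category EpiTop, with
    underlying set C(X,Y) and counit the evaluation map, is characterised by
    its universal property: [e] (a structure on C(X,Y)) is epitopological,
    ev : e x X -> Y is continuous, and for every epitopological Z and every
    continuous g : Z x X -> Y the transpose z |-> g(z, -) is continuous
    Z -> e.  (Such a transpose is automatically unique.) *)
Definition is_epi_exp (X Y : pspace) (e : set_system (pt X -> pt Y) -> (pt X -> pt Y) -> Prop)
    : Prop :=
  let E := @PSpace (pt X -> pt Y) (ps_cont X Y) e in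
  epitop E /\
  ps_cont (ps_prod E X) Y (@ev (pt X) (pt Y)) /\
  forall Z : pspace, epitop Z ->
    forall g : pt Z * pt X -> pt Y, ps_cont (ps_prod Z X) Y g ->
      ps_cont Z E (fun z x => g (z, x)).

(** The initial structure in EpiTop w.r.t. the inclusion of a subset [S] of
    the carrier of [E] (universal property of a subobject in EpiTop). *)
Definition is_epi_sub (E : pspace) (S : set (pt E))
    (s : set_system (pt E) -> pt E -> Prop) : Prop :=
  let Sub := @PSpace (pt E) S s in
  S `<=` car E /\
  epitop Sub /\
  ps_cont Sub E id /\
  forall Z : pspace, epitop Z -> forall g : pt Z -> pt E,
    (forall z, car Z z -> S (g z)) -> ps_cont Z E g -> ps_cont Z Sub g.

Definition unit_interval : set Rdefinitions.R := `[0%R, 1%R].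
Definition I01 : Type := set_type unit_interval.

Lemma in_unit_interval0 : (0%R : Rdefinitions.R) \in unit_interval.
Proof. by apply/mem_set; rewrite /unit_interval /= in_itv /= lexx ler01. Qed.
Lemma in_unit_interval1 : (1%R : Rdefinitions.R) \in unit_interval.
Proof. by apply/mem_set; rewrite /unit_interval /= in_itv /= lexx ler01. Qed.

Definition I0 : I01 := exist _ 0%R in_unit_interval0.
Definition I1 : I01 := exist _ 1%R in_unit_interval1.

Definition Ips : pspace := top_ps I01.

Definition full_ps (T : Type) (c : set_system T -> T -> Prop) : pspace :=
  @PSpace T setT c.

Definition ps_loops (X : pspace) (x0 : pt X) : set (I01 -> pt X) :=
  [set l | ps_cont Ips X l /\ l I0 = x0 /\ l I1 = x0].

(** Omega^ps(X, x0): subspace (initial structure in PsTop w.r.t. the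
    inclusion) of the exponential X^[0,1] *)
Definition Omega_ps (X : pspace) (x0 : pt X) : pspace :=
  @PSpace (I01 -> pt X) (ps_loops X x0) (cv (ps_exp Ips X)).

Definition epi_exp_I (X : pspace)
    (e : set_system (I01 -> pt X) -> (I01 -> pt X) -> Prop) : pspace :=
  @PSpace (I01 -> pt X) (ps_cont Ips X) e.

(** Omega^epi(X, x0) is the set [ps_loops X x0] with a structure [s] such that
    [is_epi_sub (epi_exp_I X e) (ps_loops X x0) s], where [is_epi_exp Ips X e]. *)

(** Omega^top(X', x0'): based (topologically) continuous loops with the
    subspace topology of the compact-open topology, regarded as a
    pseudotopological space (ultrafilter convergence in the subspace is
    convergence in the ambient compact-open space). *)
Definition top_loops (X : topologicalType) (x0 : X) : set (I01 -> X) :=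
  [set l | continuous l /\ l I0 = x0 /\ l I1 = x0].

Definition Omega_top (X : topologicalType) (x0 : X) : pspace :=
  @PSpace (I01 -> X) (top_loops X x0)
    (fun U l => (U : set_system (@compact_open I01 X)) --> (l : @compact_open I01 X)).

(* Main.v *)
Require Import Defs.
From HB Require Import structures.
From mathcomp Require Import all_boot all_order all_algebra.
From mathcomp Require Import all_classical all_reals all_analysis.
From mathcomp Require Import Rstruct Rstruct_topology.
Local Open Scope classical_set_scope.

Lemma fI {T : Type} {F : set_system T} {A B : set T} :
  Filter F -> F A -> F B -> F (A `&` B).
Proof. by move=> fF; apply: filterI. Qed.

Lemma fS {T : Type} {F : set_system T} {A B : set T} :
  Filter F -> A `<=` B -> F A -> F B.
Proof. by move=> fF; apply: filterS. Qed.

Lemma proper_contra {T : Type} {F : set_system T} {A : set T} :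
  ProperFilter F -> F A -> F (~` A) -> False.
Proof.
move=> pF FA FnA; have fF : Filter F := pF.
have h := fI fF FA FnA; rewrite setICr in h; by apply: (@filter_not_empty _ F pF).
Qed.

Lemma ultra_fmap {T U : Type} (f : T -> U) {F : set_system T} :
  UltraFilter F -> UltraFilter (fmap f F).
Proof.
move=> uF; have pF := @ultra_proper _ _ uF.
have pfF : ProperFilter (fmap f F) by apply: fmap_proper_filter.
split => // G pG FG; rewrite eqEsubset; split => // A GA.
case: (in_ultra_setVsetC (f @^-1` A) uF) => // nA.
have : G (~` A) by apply: FG.
by move=> GnA; exfalso; apply: (proper_contra pG GA GnA).
Qed.

Lemma ultra_all {T : Type} (H : set_system T) (A : set T) :
  Filter H -> (forall V, UltraFilter V -> H `<=` V -> V A) -> H A.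
Proof.
move=> fH hV; apply: contrapT => nHA.
pose H' := within (~` A) H.
have fH' : Filter H' by apply: within_filter.
have pH' : ProperFilter H'.
  apply: Build_ProperFilter => //; rewrite /H' /within /= => h0.
  apply: nHA; apply: filterS h0 => x /= hx; apply: contrapT => nAx.
  by apply: (hx nAx).
have [V [uV H'V]] := ultraFilterLemma pH'.
have HV : H `<=` V.
  move=> P HP; apply: H'V; rewrite /H' /within /=.
  by apply: filterS HP => x Px _.
have VA := hV V uV HV.
have VnA : V (~` A) by apply: H'V; rewrite /H' /within /=; apply: filterS (@filterT _ _ fH) => x _ ?.
exact: (proper_contra (@ultra_proper _ _ uV) VA VnA).
Qed.

Lemma ultra_lift {S T : Type} (H : set_system S) (k : S -> T) (W : set_system T) :
  Filter H -> UltraFilter W -> fmap k H `<=` W ->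
  exists W' : set_system S, [/\ UltraFilter W', H `<=` W' & fmap k W' = W].
Proof.
move=> fH uW kHW; have pW := @ultra_proper _ _ uW.
pose H' := [set P | exists C B, [/\ H C, W B & C `&` k @^-1` B `<=` P]].
have fH' : Filter H'.
  constructor.
  - by exists setT, setT; split => //; apply: filterT.
  - move=> P Q [C1 [B1 [HC1 WB1 s1]]] [C2 [B2 [HC2 WB2 s2]]].
    exists (C1 `&` C2), (B1 `&` B2); split; [exact: filterI|exact: filterI|].
    by move=> x [[c1 c2] [b1 b2]]; split; [apply: s1|apply: s2].
  - by move=> P Q PQ [C [B [HC WB s]]]; exists C, B; split => //; apply: subset_trans PQ.
have pH' : ProperFilter H'.
  apply: Build_ProperFilter => // -[C [B [HC WB s]]].
  have : W (~` B).
    apply: kHW; rewrite /fmap /=; apply: filterS HC => x Cx Bkx.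
    by have [] := s x.
  by move=> WnB; apply: (proper_contra pW WB WnB).
have [W' [uW' H'W']] := ultraFilterLemma pH'.
exists W'; split => //.
  move=> C HC; apply: H'W'; exists C, setT; split; [done|exact: filterT|by move=> x []].
have uk := ultra_fmap k uW'.
apply: (@max_filter _ _ uW).
move=> B WB; apply: H'W'; exists setT, B; split; [exact: filterT|done|by move=> x []].
Qed.

Lemma prod_sub {A B : Type} (U : set_system (A * B)) :
  Filter U -> filter_prod (fmap fst U) (fmap snd U) `<=` U.
Proof.
move=> fU P [[P1 P2] [h1 h2] s]; apply: (fS fU s).
by apply: (fS fU _ (fI fU h1 h2)) => -[x y] [].
Qed.

Lemma ultraT {T : Type} {F : set_system T} : UltraFilter F -> F setT.
Proof. by move=> uF; have pF := @ultra_proper _ _ uF; apply: filterT. Qed.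


Lemma fcv_top {T : topologicalType} {G : set_system T} {x : T} :
  Filter G -> fcv (top_ps T) G x <-> G --> x.
Proof.
move=> fG; split.
  move=> h A xA; apply: ultra_all => V uV GV.
  have fV : Filter V := @ultra_proper _ _ uV.
  exact: (h V (conj uV (filterT)) GV A xA).
by move=> Gx V [uV _] GV A /Gx /GV.
Qed.

Lemma top_pseudo (T : topologicalType) : is_pseudotop (top_ps T).
Proof. by move=> x _ A /nbhs_singleton Ax y ->. Qed.

Lemma cont_top (T U : topologicalType) (k : T -> U) :
  ps_cont (top_ps T) (top_ps U) k <-> continuous k.
Proof.
split.
  move=> [_ c2] t A kA; suff : nbhs t (k @^-1` A) by [].
  apply: ultra_all => V uV GV.
  have fV : Filter V := @ultra_proper _ _ uV.
  exact: (c2 V t (conj uV filterT) I GV A kA).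
by move=> ck; split => // W t _ _ h A /ck kA; exact: h _ kA.
Qed.

Lemma fmap_principal {S T : Type} (f : S -> T) (x : S) :
  fmap f (principal_filter x) = principal_filter (f x).
Proof.
rewrite funeqE => P; rewrite propeqE /=; split.
  by move=> h y ->; apply: h.
by move=> h y ->; apply: h.
Qed.

Lemma exp_top_principal (Y Z : topologicalType) (k : Y -> Z) :
  ps_cont (top_ps Y) (top_ps Z) k ->
  cv (ps_exp (top_ps Y) (top_ps Z)) (principal_filter k) k.
Proof.
move=> /cont_top ck G x pG _ _ /(fcv_top (@filter_filter _ _ pG)) Gx.
apply/fcv_top.
move=> A kA.
exists ([set k], k @^-1` A); first by split => //=; apply: Gx; apply: ck.
by move=> [g y] /= [-> ?].
Qed.

Lemma ultra_on_principal {X : pspace} {x : pt X} :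
  car X x -> ultra_on X (principal_filter x).
Proof. by move=> hx; split; [exact: principal_filter_ultra| move=> y ->]. Qed.

Lemma epitop_pseudo (X : pspace) : epitop X -> is_pseudotop X.
Proof.
move=> [J [Y [Z [f [hcar hiff]]]]] x hx.
apply/(hiff _ _ (ultra_on_principal hx) hx) => j.
rewrite fmap_principal; apply: exp_top_principal; exact: hcar.
Qed.

Lemma top_epitop (T : topologicalType) : epitop (top_ps T).
Proof.
exists unit, (fun _ => T), (fun _ => T), (fun _ (x : T) => fun _ : T => x).
split.
  by move=> _ x _; apply/cont_top; apply: cst_continuous.
move=> U x [uU _] _; have fU : Filter U := @ultra_proper _ _ uU.
split.
  move=> Ux _ G y pG _ _ _; apply/fcv_top => A /Ux UA.
  exists ([set g : T -> T | forall z, A (g z)], setT); last by move=> [g z] /= [].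
  by split => //=; [apply: fS fU _ UA => a Aa z| apply: filterT].
move=> /(_ tt) h; have := h (principal_filter x) x (principal_filter_proper x) (fun y _ => I) I.
move=> /(_ (proj2 (fcv_top _) (top_pseudo T x I))) h2.
apply: (h2 U (conj uU filterT)).
move=> P [[P1 P2] [/= h3 h4] s]; apply: fS fU _ h3 => a /= P1a.
by have := s (fun _ => a, x) (conj P1a (h4 x erefl)).
Qed.

Lemma fcv_of_cvg {T : topologicalType} {G : set_system T} {x : T} :
  Filter G -> G --> x -> fcv (top_ps T) G x.
Proof. by move=> fG /(fcv_top fG). Qed.


Section prodcvg.
Context {Y T : topologicalType}.

Lemma pcvg_fst {U : set_system (Y * T)} {p : Y * T} :
  U --> p -> fmap fst U --> p.1.
Proof.
move=> h A Ap; apply: h; exists (A, setT) => //=; first by split => //; apply: filterT.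
by move=> [a b] [].
Qed.

Lemma pcvg_snd {U : set_system (Y * T)} {p : Y * T} :
  U --> p -> fmap snd U --> p.2.
Proof.
move=> h A Ap; apply: h; exists (setT, A) => //=; first by split => //; apply: filterT.
by move=> [a b] [].
Qed.

Lemma pcvg_pair {G1 : set_system Y} {G2 : set_system T} {y : Y} {t : T} :
  G1 --> y -> G2 --> t -> filter_prod G1 G2 --> (y, t).
Proof.
move=> h1 h2 A [[P Q] [/= hP hQ] s]; exists (P, Q) => //; split; [exact: h1|exact: h2].
Qed.
End prodcvg.

Lemma fcv_self {X : pspace} {U : set_system (pt X)} {x : pt X} :
  ultra_on X U -> cv X U x -> fcv X U x.
Proof.
move=> [uU _] h V [uV _] UV.
by have -> := @max_filter _ _ uU V (@ultra_proper _ _ uV) UV.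
Qed.

Lemma ultra_sub_eq {T : Type} (U V : set_system T) :
  UltraFilter U -> UltraFilter V -> U `<=` V -> V = U.
Proof. by move=> uU uV UV; apply: (@max_filter _ _ uU V (@ultra_proper _ _ uV) UV). Qed.

Lemma fmap_cst {S T : Type} (U : set_system S) (z : T) :
  ProperFilter U -> fmap (fun _ => z) U = principal_filter z.
Proof.
move=> pU; rewrite funeqE => P; rewrite propeqE /=; split.
  move=> h y ->; apply: contrapT => nPz.
  by apply: (@filter_not_empty _ U pU); apply: fS h => x /=.
by move=> h; apply: fS (@filterT _ _ pU) => x _ /=; apply: h.
Qed.

Lemma ev_cont (A X : pspace) :
  ps_cont (ps_prod (ps_exp A X) A) X (@ev (pt A) (pt X)).
Proof.
split.
  by move=> [phi a] [/= [hc _] ha]; apply: hc.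
move=> U [phi a] [uU Ucar] [/= hphi ha] [h1 h2].
have pU := @ultra_proper _ _ uU; have fU : Filter U := pU.
have uS := ultra_fmap snd uU.
have Scar : fmap snd U (car A) by apply: fS fU _ Ucar => -[? ?] [].
have := h1 (fmap snd U) a (@ultra_proper _ _ uS) Scar ha (fcv_self (conj uS Scar) h2).
move=> /= h; apply: h.
  split; first exact: ultra_fmap.
  by apply: fS fU _ Ucar => -[f b] [/= [hf _] hb]; apply: hf.
move=> P /prod_sub; exact.
Qed.

Lemma exp_univ (A X Z : pspace) (g : pt Z * pt A -> pt X) :
  is_pseudotop Z -> ps_cont (ps_prod Z A) X g ->
  ps_cont Z (ps_exp A X) (fun z x => g (z, x)).
Proof.
move=> psZ [gcar gcv]; split.
  move=> z hz; split; first by move=> x hx; apply: gcar; split.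
  move=> U x [uU Ucar] hx hU.
  have pU := @ultra_proper _ _ uU; have fU : Filter U := pU.
  pose W := fmap (fun a => (z, a)) U.
  have uW : UltraFilter W := ultra_fmap _ uU.
  have Wcar : W (car (ps_prod Z A)) by apply: fS fU _ Ucar => a /= ha; split.
  have := gcv W (z, x) (conj uW Wcar) (conj hz hx); apply; split => //=.
  have -> : fmap fst W = principal_filter z by apply: fmap_cst.
  exact: psZ.
move=> U z [uU Ucar] hz hU G x pG Gcar hx hG V [uV Vcar] hV.
have pU := @ultra_proper _ _ uU; have fU : Filter U := pU.
have fG : Filter G := pG.
have fP : Filter (filter_prod U G) := filter_prod_filter _ _.
have [W [uW UGW eW]] : exists W : set_system (pt Z * pt A),
    [/\ UltraFilter W, filter_prod U G `<=` W & fmap g W = V].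
  apply: ultra_lift => //.
  move=> B [[P Q] [/= hP hQ] s]; apply: hV.
  exists ((fun z x => g (z, x)) @` P, Q) => //=.
    by split => //; apply: fS fU _ hP => p Pp; exists p.
  by move=> [f a] /= [[p Pp <-] Qa]; apply: (s (p, a)).
have pW := @ultra_proper _ _ uW; have fW : Filter W := pW.
have Wcar : W (car Z `*` car A).
  by apply: UGW; exists (car Z, car A).
have Ufst : fmap fst W = U.
  apply: ultra_sub_eq => //; first exact: ultra_fmap.
  move=> P hP; apply: UGW; exists (P, setT) => //=; first by split => //; apply: filterT.
  by move=> [a b] [].
have uS : UltraFilter (fmap snd W) := ultra_fmap _ uW.
have GS : G `<=` fmap snd W.
  move=> Q hQ; apply: UGW; exists (setT, Q) => //=; first by split => //; apply: filterT.
  by move=> [a b] [].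
have Scar : fmap snd W (car A) by apply: GS.
have hS : cv A (fmap snd W) x by apply: hG.
have := gcv W (z, x) (conj uW Wcar) (conj hz hx); rewrite eW; apply; split => //=.
by rewrite Ufst.
Qed.


Lemma exp_epitop (T : topologicalType) (X : pspace) :
  epitop X -> epitop (ps_exp (top_ps T) X).
Proof.
move=> [J [Y [Z [f [hcar hiff]]]]].
exists J, (fun j => (Y j * T)%type : topologicalType), Z,
  (fun j (phi : T -> pt X) (p : Y j * T) => f j (phi p.2) p.1).
split.
  move=> j phi [phicar phicv]; split => // U [y t] [uU _] _ hU.
  have pU := @ultra_proper _ _ uU; have fU : Filter U := pU.
  have uS := ultra_fmap snd uU.
  have hS : fmap snd U --> t := pcvg_snd hU.
  have c1 : cv X (fmap phi (fmap snd U)) (phi t) := phicv (fmap snd U) t (conj uS (ultraT uS)) I hS.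
  have u1 : ultra_on X (fmap phi (fmap snd U)).
    split; first exact: ultra_fmap.
    by apply: fS fU _ filterT => p _; apply: phicar.
  have c2 := (hiff _ _ u1 (phicar t I)).1 c1 j.
  have uF := ultra_fmap fst uU.
  have := c2 (fmap fst U) y (@ultra_proper _ _ uF) (ultraT uF) I (fcv_of_cvg (@ultra_proper _ _ uF) (pcvg_fst hU)).
  move=> /(_ (fmap (fun p => f j (phi p.2) p.1) U) (conj (ultra_fmap _ uU) (ultraT (ultra_fmap _ uU)))); apply.
  move=> A [[P Q] [hP hQ] s].
  have hP' : U [set p | P (f j (phi p.2))] := hP.
  have hQ' : U [set p | Q p.1] := hQ.
  apply: fS fU _ (fI fU hP' hQ') => -[a b] /= [Pb Qa].
  exact: (s (f j (phi b), a) (conj Pb Qa)).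
move=> U phi [uU Ucar] [phicar phicv].
have pU := @ultra_proper _ _ uU; have fU : Filter U := pU.
split.
  move=> hU j G' [y t] pG' _ _ /(fcv_top (@filter_filter _ _ pG')) hG' W [uW _] hW.
  have fG' : Filter G' := pG'.
  pose k := fun w : (T -> pt X) * (Y j * T) => f j (w.1 w.2.2) w.2.1.
  have fP : Filter (filter_prod U G') := filter_prod_filter _ _.
  have [Wh [uWh UGWh eWh]] : exists Wh : set_system ((T -> pt X) * (Y j * T)),
      [/\ UltraFilter Wh, filter_prod U G' `<=` Wh & fmap k Wh = W].
    apply: ultra_lift => //.
    move=> A [[P Q] [/= hP hQ] s]; apply: hW.
    exists ((fun (phi : T -> pt X) (p : Y j * T) => f j (phi p.2) p.1) @` P, Q) => //=.
      by split => //; apply: fS fU _ hP => p Pp; exists p.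
    by move=> [g q] /= [[p Pp <-] Qq]; apply: (s (p, q)).
  have pWh := @ultra_proper _ _ uWh; have fWh : Filter Wh := pWh.
  pose V := fmap (fun w : (T -> pt X) * (Y j * T) => w.1 w.2.2) Wh.
  have uV : UltraFilter V := ultra_fmap _ uWh.
  have Vcar : V (car X).
    have : Wh (ps_cont (top_ps T) X `*` setT).
      by apply: UGWh; exists (ps_cont (top_ps T) X, setT) => //; split => //; apply: filterT.
    move=> h; apply: (fS fWh _ h) => -[p q] [/= [pc _] _]; exact: pc.
  have hS : fmap snd G' --> t := pcvg_snd hG'.
  have pS : ProperFilter (fmap snd G') := fmap_proper_filter _ pG'.
  have cV : cv X V (phi t).
    apply: (hU (fmap snd G') t pS (@filterT _ _ pS) I (fcv_of_cvg pS hS) V (conj uV Vcar)).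
    move=> A [[P Q] [/= hP hQ] s].
    have : Wh (P `*` (snd @^-1` Q)) by apply: UGWh; exists (P, snd @^-1` Q).
    by move=> h; apply: (fS fWh _ h) => -[p q] [/= Pp Qq]; apply: (s (p, q.2)).
  have := (hiff V (phi t) (conj uV Vcar) (phicar t I)).1 cV j.
  have hF : fmap fst G' --> y := pcvg_fst hG'.
  have pF : ProperFilter (fmap fst G') := fmap_proper_filter _ pG'.
  move=> /(_ (fmap fst G') y pF (@filterT _ _ pF) I (fcv_of_cvg pF hF) W (conj uW (ultraT uW))); apply.
  move=> A [[P Q] [hP hQ] s]; rewrite -eWh.
  have hP' : Wh [set w | P (f j (w.1 w.2.2))] := hP.
  have hQ' : Wh [set w | Q w.2.1].
    by apply: UGWh; exists (setT, fst @^-1` Q) => //=; [split => //; apply: filterT| move=> [? ?] []].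
  apply: fS fWh _ (fI fWh hP' hQ') => -[p [a b]] /= [Pp Qa].
  exact: (s (f j (p b), a) (conj Pp Qa)).
move=> hR G t pG _ _ /(fcv_top (@filter_filter _ _ pG)) hG V [uV Vcar] hV.
have fG : Filter G := pG.
apply/(hiff V (phi t) (conj uV Vcar) (phicar t I)) => j G'' y pG'' _ _.
move=> /(fcv_top (@filter_filter _ _ pG'')) hG'' W [uW _] hW.
have fG'' : Filter G'' := pG''.
have pP : ProperFilter (filter_prod G'' G) := @filter_prod_proper _ _ _ _ pG'' pG.
have := hR j (filter_prod G'' G) (y, t) pP (@filterT _ _ pP) I
  (fcv_of_cvg pP (pcvg_pair hG'' hG)) W (conj uW (ultraT uW)).
apply.
move=> A [[P Q] [hP hQ] s]; move: hQ => [[Q1 Q2] [/= h1 h2] sQ].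
apply: hW.
pose B := (@ev T (pt X)) @` ((fun (phi : T -> pt X) (p : Y j * T) => f j (phi p.2) p.1) @^-1` P `*` Q2).
have VB : V B.
  apply: hV; exists ((fun (phi : T -> pt X) (p : Y j * T) => f j (phi p.2) p.1) @^-1` P, Q2) => //.
  by move=> w Pw; exists w.
exists (f j @` B, Q1) => /=.
  by split => //; apply: fS (@ultra_proper _ _ uV) _ VB => a Ba; exists a.
move=> [g y'] /= [[a [[p s'] [/= Pp Qs] <-] <-] Qy].
exact: (s (_, (y', s')) (conj Pp (sQ (y', s') (conj Qy Qs)))).
Qed.


Lemma epi_exp_e0 (X : pspace) : epitop X -> is_epi_exp Ips X (cv (ps_exp Ips X)).
Proof.
move=> epX; split; first exact: (exp_epitop I01 X epX).
split; first exact: ev_cont.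
move=> Z eZ g gc; exact: (@exp_univ Ips X Z g (epitop_pseudo Z eZ) gc).
Qed.

Lemma epi_exp_unique {A X : pspace} {e1 e2} :
  is_epi_exp A X e1 -> is_epi_exp A X e2 -> same_cv _ (ps_cont A X) e1 e2.
Proof.
move=> [ep1 [ev1 u1]] [ep2 [ev2 u2]] U x uU US Sx; split.
  by move=> h; have [_ c] := u2 _ ep1 _ ev1; exact: (c U x (conj uU US) Sx h).
by move=> h; have [_ c] := u1 _ ep2 _ ev2; exact: (c U x (conj uU US) Sx h).
Qed.

Lemma same_cv_sym {T : Type} {S : set T} {c1 c2} : same_cv _ S c1 c2 -> same_cv _ S c2 c1.
Proof. by move=> h U x uU US Sx; apply: iff_sym; apply: h. Qed.

Lemma same_cv_trans (T : Type) (S : set T) c1 c2 c3 :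
  same_cv _ S c1 c2 -> same_cv _ S c2 c3 -> same_cv _ S c1 c3.
Proof. by move=> h1 h2 U x uU US Sx; apply: iff_trans (h1 _ _ uU US Sx) (h2 _ _ uU US Sx). Qed.

Lemma epitop_transfer {T : Type} {S : set T} {s1 s2} :
  same_cv _ S s1 s2 -> epitop (@PSpace T S s1) -> epitop (@PSpace T S s2).
Proof.
move=> hs [J [Y [Z [f [hc hi]]]]]; exists J, Y, Z, f; split => // U x uU Sx.
have := hi U x uU Sx; have := hs U x uU.1 uU.2 Sx; simpl; tauto.
Qed.

Lemma epitop_restrict {E : pspace} {S : set (pt E)} :
  epitop E -> S `<=` car E -> epitop (@PSpace (pt E) S (cv E)).
Proof.
move=> [J [Y [Z [f [hc hi]]]]] sub; exists J, Y, Z, f; split.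
  by move=> j x Sx; apply: hc; apply: sub.
move=> U x [uU US] Sx; have pU := @ultra_proper _ _ uU.
exact: (hi U x (conj uU (fS pU sub US)) (sub x Sx)).
Qed.

Lemma sub_unique {E : pspace} {S : set (pt E)} {s1 s2} :
  is_epi_sub E S s1 -> is_epi_sub E S s2 -> same_cv _ S s1 s2.
Proof.
move=> [_ [ep1 [c1 u1]]] [_ [ep2 [c2 u2]]] U x uU US Sx; split.
  by move=> h; have [_ c] := u2 _ ep1 id (fun z hz => hz) c1; exact: (c U x (conj uU US) Sx h).
by move=> h; have [_ c] := u1 _ ep2 id (fun z hz => hz) c2; exact: (c U x (conj uU US) Sx h).
Qed.

Lemma sub_transfer {E : pspace} {S : set (pt E)} {s1 s2} :
  same_cv _ S s1 s2 -> is_epi_sub E S s1 -> is_epi_sub E S s2.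
Proof.
move=> hs [sub [ep1 [[cc1 cv1] u1]]]; split => //; split; first exact: epitop_transfer hs ep1.
split.
  split => // U x [uU US] Sx h; apply: cv1 => //; exact: (proj2 (hs U x uU US Sx) h).
move=> Z eZ g gS gc; have [cg cvg] := u1 Z eZ g gS gc; split => // U z [uU Uc] zc h.
have pU := @ultra_proper _ _ uU.
apply: (proj1 (hs _ _ (ultra_fmap g uU) _ (gS z zc))); last exact: (cvg U z (conj uU Uc) zc h).
exact: (fS pU gS Uc).
Qed.

Lemma exp_sub_e0 (X : pspace) (x0 : pt X) e :
  epitop X -> is_epi_exp Ips X e ->
  is_epi_sub (epi_exp_I X e) (ps_loops X x0) (cv (ps_exp Ips X)).
Proof.
move=> epX he; have hs := epi_exp_unique (epi_exp_e0 X epX) he.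
have sub : ps_loops X x0 `<=` ps_cont Ips X by move=> l [].
split => //; split.
  exact: (epitop_restrict (exp_epitop I01 X epX) sub).
split.
  split => // U l [uU US] Sl h; have pU := @ultra_proper _ _ uU.
  exact: (proj1 (hs U l uU (fS pU sub US) (sub l Sl)) h).
move=> Z eZ g gS [gc gcv]; split => // U z [uU Uc] zc h.
have pU := @ultra_proper _ _ uU.
have := gcv U z (conj uU Uc) zc h.
apply: (proj2 (hs _ _ (ultra_fmap g uU) _ (sub _ (gS z zc)))).
by apply: (fS pU _ Uc) => w /gS /sub.
Qed.

Lemma part1 (X : pspace) (x0 : pt X) :
  is_pseudotop X -> epitop X -> car X x0 ->
  (exists e, is_epi_exp Ips X e) /\
  (forall e, is_epi_exp Ips X e ->
     forall s, is_epi_sub (epi_exp_I X e) (ps_loops X x0) s <->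
               same_cv _ (ps_loops X x0) s (cv (Omega_ps X x0))).
Proof.
move=> _ epX _; split; first by exists (cv (ps_exp Ips X)); exact: epi_exp_e0.
move=> e he s; have h0 := exp_sub_e0 X x0 e epX he; split.
  by move=> hsub; exact: (sub_unique hsub h0).
move=> hs; apply: (sub_transfer _ h0); exact: (same_cv_sym hs).
Qed.


Lemma I01_compact : compact [set: I01].
Proof.
rewrite compact_ultra /= => F uF _.
have pF := @ultra_proper _ _ uF.
pose G := fmap (@set_val _ unit_interval) F.
have uG : UltraFilter G := ultra_fmap _ uF.
have G01 : G `[0%R, 1%R].
  by apply: fS pF _ (@filterT _ _ pF) => -[x hx] _ /=; exact: (set_mem hx).
have := @segment_compact Rdefinitions.R 0%R 1%R.
rewrite compact_ultra => /(_ G uG G01) [p [hp Gp]].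
exists (exist _ p (mem_set hp)); split => //.
move=> A [B /= [[W oW <-]] /= Wq BA]; apply: fS pF BA _.
by apply: Gp; apply: open_nbhs_nbhs; split.
Qed.

Lemma I01_compact_nbhs (t : I01) (W : set I01) :
  nbhs t W -> exists K : set I01, [/\ compact K, nbhs t K & K `<=` W].
Proof.
move=> /uniform_regular [R hR cRW]; exists (closure R); split => //.
- by rewrite -[closure R]setTI; apply: compact_closedI; [exact: I01_compact| exact: closed_closure].
- by apply: filterS hR; exact: subset_closure.
Qed.

Lemma co_equiv (X : topologicalType) (U : set_system (I01 -> X)) (l : I01 -> X) :
  UltraFilter U -> continuous l ->
  (cv (ps_exp Ips (top_ps X)) U l <->
   (U : set_system (@compact_open I01 X)) --> (l : @compact_open I01 X)).
Proof.
move=> uU lc; have pU := @ultra_proper _ _ uU; have fU : Filter U := pU.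
split.
- move=> h; apply/compact_open_cvgP => K O cK oO lKO.
  case: (in_ultra_setVsetC [set g : I01 -> X | g @` K `<=` O] uU) => // nB; exfalso.
  pose P := fun g : I01 -> X => exists s, K s /\ ~ O (g s).
  have hB : forall g, (~` [set g : I01 -> X | g @` K `<=` O]) g -> P g.
    move=> g ng; apply: contrapT => nP; apply: ng => _ [s Ks <-].
    by apply: contrapT => nO; apply: nP; exists s.
  pose tau := fun g => match pselect (P g) with left e => proj1_sig (cid e) | right _ => I0 end.
  have htau : forall g, P g -> K (tau g) /\ ~ O (g (tau g)).
    by move=> g Pg; rewrite /tau; case: pselect => // e; exact: (proj2_sig (cid e)).
  pose Gt := fmap tau U.
  have uGt : UltraFilter Gt := ultra_fmap _ uU.
  have pGt := @ultra_proper _ _ uGt.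
  have GtK : Gt K by apply: fS fU _ nB => g /hB /htau [].
  move: cK; rewrite compact_ultra => /(_ Gt uGt GtK) [t [Kt Gtt]].
  have hc := h Gt t pGt (@filterT _ _ pGt) I (fcv_of_cvg pGt Gtt).
  have HO : fmap (@ev I01 X) (filter_prod U Gt) O.
    apply: ultra_all => V uV HV; apply: (hc V (conj uV (ultraT uV)) HV O).
    by apply: open_nbhs_nbhs; split => //; apply: lKO; exists t.
  move: HO => [[P1 Q1] [/= hP1 hQ1] s].
  have hU : U (P1 `&` (tau @^-1` Q1 `&` ~` [set g : I01 -> X | g @` K `<=` O])).
    exact: (fI fU hP1 (fI fU hQ1 nB)).
  have [g [P1g [Q1tg ng]]] := @filter_ex _ _ pU _ hU.
  have [_ nO] := htau g (hB g ng).
  exact: nO (s (g, tau g) (conj P1g Q1tg)).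
- move=> h G t pG _ _ /(fcv_top (@filter_filter _ _ pG)) hG V [uV _] hV N.
  have pV := @ultra_proper _ _ uV.
  move=> hN; rewrite nbhsE in hN; case: hN => O [oO Ot] ON.
  have : nbhs t (l @^-1` O) by apply: lc; apply: open_nbhs_nbhs; split.
  move=> /I01_compact_nbhs [K [cK Kt KO]].
  have UK : U [set g : I01 -> X | g @` K `<=` O].
    apply: (proj1 (compact_open_cvgP (l : @compact_open I01 X) fU) h) => //.
    by move=> _ [s Ks <-]; apply: KO.
  have GK : G K := hG K Kt.
  apply: (fS pV ON); apply: hV; exists ([set g : I01 -> X | g @` K `<=` O], K) => //.
  by move=> [g s] /= [gK Ks]; apply: gK; exists s.
Qed.


Lemma part2 (X' : topologicalType) (x0' : X') :
     (exists e, is_epi_exp Ips (top_ps X') e) /\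
     (forall e, is_epi_exp Ips (top_ps X') e ->
        ps_loops (top_ps X') x0' = car (Omega_top X' x0') /\
        forall s, is_epi_sub (epi_exp_I (top_ps X') e) (ps_loops (top_ps X') x0') s <->
                  same_cv _ (car (Omega_top X' x0')) s (cv (Omega_top X' x0'))).
Proof.
have [ex hall] := part1 (top_ps X') x0' (top_pseudo X') (top_epitop X') I.
split => // e he.
have eqL : ps_loops (top_ps X') x0' = car (Omega_top X' x0').
  rewrite /ps_loops /= /top_loops funeqE => l; rewrite propeqE; split.
    by move=> [/cont_top h1 h2]; split.
  by move=> [/cont_top h1 h2]; split.
split => // s; rewrite (hall e he s) -eqL.
have hco : same_cv _ (ps_loops (top_ps X') x0') (cv (Omega_ps (top_ps X') x0'))
    (cv (Omega_top X' x0')).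
  move=> U l uU UL Ll; have pU := @ultra_proper _ _ uU.
  apply: co_equiv => //; by case: Ll => /cont_top.
split => h; first exact: (same_cv_trans _ _ _ _ _ h hco).
exact: (same_cv_trans _ _ _ _ _ h (same_cv_sym hco)).
Qed.

Theorem proposition5p8 :
  (* (1) X epitopological: Omega^ps(X,x0) = Omega^epi(X,x0) *)
  (forall (X : pspace) (x0 : pt X),
     is_pseudotop X -> epitop X -> car X x0 ->
     (exists e, is_epi_exp Ips X e) /\
     (forall e, is_epi_exp Ips X e ->
        forall s, is_epi_sub (epi_exp_I X e) (ps_loops X x0) s <->
                  same_cv _ (ps_loops X x0) s (cv (Omega_ps X x0)))) /\
  (* (2) X' topological: Omega^epi(X',x0') = Omega^top(X',x0') *)
  (forall (X' : topologicalType) (x0' : X'),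
     (exists e, is_epi_exp Ips (top_ps X') e) /\
     (forall e, is_epi_exp Ips (top_ps X') e ->
        ps_loops (top_ps X') x0' = car (Omega_top X' x0') /\
        forall s, is_epi_sub (epi_exp_I (top_ps X') e) (ps_loops (top_ps X') x0') s <->
                  same_cv _ (car (Omega_top X' x0')) s (cv (Omega_top X' x0')))).
Proof.
split; [exact: part1 | exact: part2].
Qed.
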